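(* Let $v_1,\dots,v_m$ be distinct values, let $X_1,\dots,X_n$ be finite domain variables with domains $D(X_i)\subseteq\{v_1,\dots,v_m\}$, and let $B_{i,j}$ ($1\le i\le n$, $1\le j\le m$) be 0/1 variables. Consider the decomposition consisting of: the channelling constraints $X_i=v_j \leftrightarrow B_{i,j}=1$ for all $1\le i\le n$, $1\le j\le m$; the constraints $[B_{1,j},\dots,B_{n,j}]\ge_{\mathrm{lex}}[B_{1,j+1},\dots,B_{n,j+1}]$ for $1\le j<m$; and the constraints $\sum_{j=1}^m B_{i,j}=1$ for $1\le i\le n$. Then enforcing GAC on $\mathrm{Precedence}([v_1,\dots,v_m],[X_1,\dots,X_n])$ is strictly stronger than enforcing GAC on each constraint of this decomposition. That is: (i) if $\mathrm{Precedence}([v_1,\dots,v_m],[X_1,\dots,X_n])$ is GAC (with all $D(X_i)$ nonempty) and the domains of the $B_{i,j}$ are $D(B_{i,j})=\{1 \mid v_j\in D(X_i)\}\cup\{0\mid D(X_i)\neq\{v_j\}\}$, then every constraint of the decomposition is GAC; and (ii) there exist domains for the $X_i$ and $B_{i,j}$ such that every constraint of the decomposition is GAC but $\mathrm{Precedence}([v_1,\dots,v_m],[X_1,\dots,X_n])$ is not GAC.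
   Context: A support of a constraint is an assignment of a value from its domain to each of its variables that satisfies it; a constraint is GAC iff every value in every variable's domain belongs to some support. For distinct values $a,b$, $\mathrm{Precedence}([a,b],[X_1,\dots,X_n])$ holds iff $\min\{i \mid X_i=a \text{ or } i=n+1\} < \min\{i \mid X_i=b \text{ or } i=n+2\}$; $\mathrm{Precedence}([v_1,\dots,v_m],[X_1,\dots,X_n])$ holds iff $\mathrm{Precedence}([v_i,v_{i+1}],[X_1,\dots,X_n])$ holds for all $1\le i<m$. $\ge_{\mathrm{lex}}$ is the non-strict lexicographic order on 0/1 vectors. *)

(* Defs.v *)
From mathcomp Require Import all_boot.
Set Implicit Arguments. Unset Strict Implicit. Unset Printing Implicit Defensive.

(* Values v_1,...,v_m are represented by their (0-based) indices j : 'I_m;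
   the X-variables X_1..X_n by i : 'I_n (0-based), the 0/1 variables
   B_{i,j} by booleans (true = 1, false = 0). *)

Record asg (n m : nat) := Asg { ax : 'I_n -> 'I_m ; ab : 'I_n -> 'I_m -> bool }.

(* Generalized arc consistency of a constraint C whose scope consists of the
   X-variables in sx and the B-variables in sb, w.r.t. domains DX, DB.
   (C is only ever applied to relations depending on the scope variables.) *)
Definition support n m (DX : 'I_n -> {set 'I_m}) (DB : 'I_n -> 'I_m -> {set bool})
  (sx : pred 'I_n) (sb : 'I_n -> 'I_m -> bool) (C : asg n m -> bool) (s : asg n m) :=
  [/\ C s, (forall i, sx i -> ax s i \in DX i)
         & (forall i j, sb i j -> ab s i j \in DB i j)].

Definition GAC n m (DX : 'I_n -> {set 'I_m}) (DB : 'I_n -> 'I_m -> {set bool})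
  (sx : pred 'I_n) (sb : 'I_n -> 'I_m -> bool) (C : asg n m -> bool) : Prop :=
  (forall i, sx i -> forall a, a \in DX i ->
      exists s, support DX DB sx sb C s /\ ax s i = a) /\
  (forall i j, sb i j -> forall c, c \in DB i j ->
      exists s, support DX DB sx sb C s /\ ab s i j = c).

Definition first_or n m (x : 'I_n -> 'I_m) (a : 'I_m) (d : nat) : nat :=
  let k := find (fun i => x i == a) (enum 'I_n) in if k < n then k else d.

(* Precedence([a,b],[X_1..X_n]) (0-based version of the paper's definition:
   the defaults n+1, n+2 become n, n+1). *)
Definition prec2 n m (x : 'I_n -> 'I_m) (a b : 'I_m) : bool :=
  first_or x a n < first_or x b n.+1.

Definition precedence n m (x : 'I_n -> 'I_m) : bool :=
  [forall j : 'I_m, forall k : 'I_m, (val k == (val j).+1) ==> prec2 x j k].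

Fixpoint lexge (s t : seq bool) : bool :=
  match s, t with
  | x :: s', y :: t' => (y < x) || ((x == y) && lexge s' t')
  | _, _ => true
  end.

Definition prec_con n m (s : asg n m) : bool := precedence (ax s).
Definition prec_sx n : pred 'I_n := predT.
Definition no_b n m : 'I_n -> 'I_m -> bool := fun _ _ => false.

Definition chan_con n m (i : 'I_n) (j : 'I_m) (s : asg n m) : bool :=
  (ax s i == j) == ab s i j.
Definition chan_sx n (i : 'I_n) : pred 'I_n := pred1 i.
Definition chan_sb n m (i : 'I_n) (j : 'I_m) : 'I_n -> 'I_m -> bool :=
  fun i' j' => (i' == i) && (j' == j).

Definition lex_con n m (j k : 'I_m) (s : asg n m) : bool :=
  lexge [seq ab s i j | i <- enum 'I_n] [seq ab s i k | i <- enum 'I_n].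
Definition lex_sb n m (j k : 'I_m) : 'I_n -> 'I_m -> bool :=
  fun _ j' => (j' == j) || (j' == k).

Definition sum_con n m (i : 'I_n) (s : asg n m) : bool :=
  \sum_(j < m) nat_of_bool (ab s i j) == 1.
Definition row_sb n m (i : 'I_n) : 'I_n -> 'I_m -> bool := fun i' _ => i' == i.

Definition no_x n : pred 'I_n := pred0.

Definition decomp_GAC n m (DX : 'I_n -> {set 'I_m}) (DB : 'I_n -> 'I_m -> {set bool}) :=
  [/\ (forall i j, GAC DX DB (chan_sx i) (chan_sb i j) (chan_con i j)),
      (forall j k : 'I_m, val k = (val j).+1 ->
          GAC DX DB (@no_x n) (lex_sb j k) (lex_con j k))
    & (forall i, GAC DX DB (@no_x n) (row_sb i) (sum_con i))].

Definition prec_GAC n m (DX : 'I_n -> {set 'I_m}) (DB : 'I_n -> 'I_m -> {set bool}) :=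
  GAC DX DB (@prec_sx n) (@no_b n m) (@prec_con n m).

Definition induced_DB n m (DX : 'I_n -> {set 'I_m}) : 'I_n -> 'I_m -> {set bool} :=
  fun i j => [set b : bool | (b && (j \in DX i)) || (~~ b && (DX i != [set j]))].

(* Main.v *)
Require Import Defs.
From mathcomp Require Import all_boot.
Set Implicit Arguments. Unset Strict Implicit. Unset Printing Implicit Defensive.

Lemma lexge_refl (s : seq bool) : lexge s s.
Proof. by elim: s => //= x s ->; rewrite eqxx orbT. Qed.

Lemma lex_find m (j k : 'I_m) (s : seq 'I_m) : j != k ->
  find (pred1 j) s <= find (pred1 k) s ->
  lexge (map (fun y => y == j) s) (map (fun y => y == k) s).
Proof.
move=> jk; elim: s => //= y s IH.
case: (eqVneq y j) => [->|yj]; first by rewrite (negbTE jk).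
case: (eqVneq y k) => [yk|yk] //=.
Qed.

Lemma prec2_le n m (x : 'I_n -> 'I_m) (j k : 'I_m) : j != k -> prec2 x j k ->
  find (pred1 j) (map x (enum 'I_n)) <= find (pred1 k) (map x (enum 'I_n)).
Proof.
move=> jk.
have -> : find (pred1 j) (map x (enum 'I_n)) = find (fun i => x i == j) (enum 'I_n) by rewrite find_map.
have -> : find (pred1 k) (map x (enum 'I_n)) = find (fun i => x i == k) (enum 'I_n) by rewrite find_map.
rewrite /prec2 /first_or /=.
set f := find (fun i => x i == j) (enum 'I_n); set g := find (fun i => x i == k) (enum 'I_n).
have hf : f <= n by rewrite -[X in _ <= X](size_enum_ord n) find_size.
have hg : g <= n by rewrite -[X in _ <= X](size_enum_ord n) find_size.
case: (ltnP f n) => Hf; case: (ltnP g n) => Hg //.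
- by move/ltnW.
- by move=> _; rewrite (leq_trans (ltnW Hf) Hg).
- by move=> /(ltn_trans Hg); rewrite ltnn.
- by move=> _; exact: leq_trans hf Hg.
Qed.

Lemma sum_ind m (a : 'I_m) : \sum_(j < m) nat_of_bool (a == j) == 1.
Proof.
rewrite (bigD1 a) //= eqxx big1 // => j /negbTE; by rewrite eq_sym => ->.
Qed.

Lemma pick_val n m (DX : 'I_n -> {set 'I_m}) i j c :
  DX i != set0 -> c \in induced_DB DX i j -> exists a, a \in DX i /\ (a == j) = c.
Proof.
move=> ne; rewrite /induced_DB in_set; case: c => /=.
  by rewrite orbF => jin; exists j; rewrite eqxx.
case: (boolP [exists a, (a \in DX i) && (a != j)]).
  by move=> /existsP[a /andP[ain aj]] _; exists a; rewrite (negbTE aj).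
move=> /existsPn H /eqP[]; apply/setP => y; rewrite in_set1.
have E z : z \in DX i -> z = j.
  by move=> zin; have := H z; rewrite zin /= negbK => /eqP.
apply/idP/eqP; first exact: E.
move=> ->; case/set0Pn: ne => z zin; by rewrite -(E z zin).
Qed.

Lemma pick2 (j : 'I_2) (c : bool) : exists a : 'I_2, (a == j) = c.
Proof.
case: c; first by exists j; rewrite eqxx.
case: j => [[|[|//]] Hj].
  by exists (Ordinal (isT : 1 < 2)).
by exists (Ordinal (isT : 0 < 2)).
Qed.

Section P1.
Variables (n m : nat) (DX : 'I_n -> {set 'I_m}).
Hypothesis ne : forall i, DX i != set0.
Hypothesis PG : prec_GAC DX (induced_DB DX).

Definition indic (s : asg n m) : asg n m := Asg (ax s) (fun i j => ax s i == j).

Lemma indic_dom (s : asg n m) : (forall i, ax s i \in DX i) ->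
  forall i j, ab (indic s) i j \in induced_DB DX i j.
Proof.
move=> H i j /=; rewrite /induced_DB in_set.
case: (eqVneq (ax s i) j) => [<-|ne'] /=; first by rewrite H.
apply/eqP => E; have := H i; rewrite E in_set1 => /eqP; exact/eqP.
Qed.

Lemma gen_sup sx sb (C : asg n m -> bool) :
  (forall s, precedence (ax s) -> C (indic s)) ->
  GAC DX (induced_DB DX) sx sb C.
Proof.
move=> HC.
have K : forall a i, a \in DX i -> exists s, Defs.support DX (induced_DB DX) sx sb C (indic s) /\ ax s i = a.
  move=> a i ain; case: PG => [PX _]; case: (PX i isT a ain) => s [[Cs Hx _] <-].
  have Hx' : forall i, ax s i \in DX i by move=> i'; exact: Hx.
  exists s; split => //; split.
  - exact: HC.
  - by move=> i' _; exact: Hx'.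
  - by move=> i' j' _; exact: indic_dom.
split.
  by move=> i _ a ain; case: (K a i ain) => s [S E]; exists (indic s).
move=> i j _ c cin; case: (pick_val (ne i) cin) => a [ain E].
case: (K a i ain) => s [S E']; exists (indic s); split => //=.
by rewrite E'.
Qed.

Lemma part1 : decomp_GAC DX (induced_DB DX).
Proof.
split.
- by move=> i j; apply: gen_sup => s _; rewrite /chan_con /= eqxx.
- move=> j k Hjk; apply: gen_sup => s P; rewrite /lex_con /=.
  have jk : j != k by apply/eqP => E; move: Hjk; rewrite E => /n_Sn.
  have P2 : prec2 (ax s) j k.
    by move/forallP: P => /(_ j) /forallP /(_ k) /implyP; apply; rewrite Hjk.
  have := lex_find jk (prec2_le jk P2).
  by rewrite -!map_comp.
- by move=> i; apply: gen_sup => s _; rewrite /sum_con /=; exact: sum_ind.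
Qed.
End P1.

Theorem theorem5 :
  (forall (n m : nat) (DX : 'I_n -> {set 'I_m}),
      (forall i, DX i != set0) ->
      prec_GAC DX (induced_DB DX) ->
      decomp_GAC DX (induced_DB DX))
  /\
  (exists (n m : nat) (DX : 'I_n -> {set 'I_m}) (DB : 'I_n -> 'I_m -> {set bool}),
      [/\ (forall i, DX i != set0), (forall i j, DB i j != set0),
          decomp_GAC DX DB & ~ prec_GAC DX DB]).
Proof.
split; first by move=> n m DX ne PG; exact: part1.
exists 1, 2, (fun _ => setT), (fun _ _ => setT).
have T1 (i : 'I_1) : i = ord0 by apply: val_inj; case: i => [[|]].
split.
- by move=> i; apply/set0Pn; exists ord0; rewrite in_setT.
- by move=> i j; apply/set0Pn; exists true; rewrite in_setT.
- split.
  + move=> i j; split.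
      move=> i' /eqP -> a _; exists (Asg (fun _ => a) (fun _ j' => a == j')).
      by split => //; split; rewrite /chan_con /= ?eqxx // => *; rewrite in_setT.
    move=> i' j' /andP[/eqP -> /eqP ->] c _; case: (pick2 j c) => a E.
    exists (Asg (fun _ => a) (fun _ j' => a == j')).
    by split => //; split; rewrite /chan_con /= ?eqxx // => *; rewrite in_setT.
  + move=> j k _; split => //.
    move=> i j' _ c _; exists (Asg (fun _ => j) (fun _ _ => c)).
    by split => //; split; rewrite /lex_con /= ?lexge_refl // => *; rewrite in_setT.
  + move=> i; split => //.
    move=> i' j' _ c _; case: (pick2 j' c) => a E.
    exists (Asg (fun _ => a) (fun _ j' => a == j')).
    by split => //; split; rewrite /sum_con /= ?sum_ind // => *; rewrite in_setT.
- case => [PX _]; case: (PX ord0 isT ord_max (in_setT _)) => s [[P _ _] E].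
  move/forallP: P => /(_ ord0) /forallP /(_ ord_max) /=.
  have e : enum 'I_1 = [:: ord0].
    by apply: (inj_map val_inj); rewrite val_enum_ord.
  by rewrite /prec2 /first_or /= e /= E.
Qed.
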